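(* Let $\omega_0$ and $\omega_1$ be two symplectic (nondegenerate, antisymmetric) bilinear forms on $\mathbb{R}^4$ and let $\Sigma\subset\mathbb{R}^4$ be a $3$-dimensional linear subspace such that: (i) if $v,w\in\Sigma$ and $\omega_0(v,w)$ or $\omega_1(v,w)$ is positive, then $\omega_0(v,w)$ and $\omega_1(v,w)$ are both nonnegative; (ii) if $v\in\ker(\omega_0|_{\Sigma})\cap\ker(\omega_1|_{\Sigma})$ and $\omega_0(v,w)>0$, then $\omega_1(v,w)\ge 0$. Then for all $0\le t\le 1$, the form $t\omega_0+(1-t)\omega_1$ is symplectic. *)

(* Defs.v *)
From HB Require Import structures.
From mathcomp Require Import all_boot all_order all_algebra.
From mathcomp Require Import reals.
Set Implicit Arguments. Unset Strict Implicit. Unset Printing Implicit Defensive.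
Import Order.TTheory GRing.Theory Num.Theory.
Local Open Scope ring_scope.

Definition bform {R : realType} (A : 'M[R]_4) (v w : 'rV[R]_4) : R :=
  (v *m A *m w^T) 0 0.

Definition antisymmetric {R : realType} (A : 'M[R]_4) : Prop :=
  forall v w, bform A v w = - bform A w v.

Definition nondegenerate {R : realType} (A : 'M[R]_4) : Prop :=
  forall v, (forall w, bform A v w = 0) -> v = 0.

Definition symplectic {R : realType} (A : 'M[R]_4) : Prop :=
  antisymmetric A /\ nondegenerate A.

Definition in_restr_ker {R : realType} {m : nat} (A : 'M[R]_4) (S : 'M[R]_(m, 4))
  (v : 'rV[R]_4) : Prop :=
  (v <= S)%MS /\ forall w, (w <= S)%MS -> bform A v w = 0.

(* Main.v *)
Require Import Defs.
From HB Require Import structures.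
From mathcomp Require Import all_boot all_order all_algebra.
From mathcomp Require Import reals.
From mathcomp Require Import ring lra.
From Stdlib Require Import Classical_Prop Classical_Pred_Type.
Import Order.TTheory GRing.Theory Num.Theory.
Local Open Scope ring_scope.

Section S.
Variable R : realType.
Implicit Types (A : 'M[R]_4) (v w : 'rV[R]_4).

Lemma bformZA a b A B v w :
  bform (a *: A + b *: B) v w = a * bform A v w + b * bform B v w.
Proof.
by rewrite /bform mulmxDr mulmxDl -!scalemxAr -!scalemxAl !mxE.
Qed.

Lemma bformDr A v w1 w2 : bform A v (w1 + w2) = bform A v w1 + bform A v w2.
Proof. by rewrite /bform linearD /= mulmxDr mxE. Qed.

Lemma bformZr A v a w : bform A v (a *: w) = a * bform A v w.
Proof. by rewrite /bform linearZ /= -scalemxAr mxE. Qed.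

Lemma bformNr A v w : bform A v (- w) = - bform A v w.
Proof. by rewrite -scaleN1r bformZr mulN1r. Qed.

Lemma antisym_tr A : Defs.antisymmetric A -> A^T = - A.
Proof.
move=> hA; apply/matrixP => i j.
have := hA (delta_mx 0 j) (delta_mx 0 i).
rewrite /bform.
have E : forall (M : 'M[R]_4) (k l : 'I_4),
  (delta_mx (0:'I_1) k *m M *m (delta_mx (0:'I_1) l)^T) 0 0 = M k l.
  move=> M k l; rewrite trmx_delta -rowE -colE !mxE; done.
by rewrite !E !mxE.
Qed.

Lemma odd_kernel (C : 'M[R]_4) (S : 'M[R]_(3, 4)) :
  Defs.antisymmetric C -> \rank S = 3%N ->
  exists u, [/\ u != 0, (u <= S)%MS & forall x, (x <= S)%MS -> bform C u x = 0].
Proof.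
move=> hC hS.
set B := S *m C *m S^T.
have hBt : B^T = - B.
  by rewrite /B !trmx_mul trmxK antisym_tr // mulNmx mulmxN mulmxA.
have hdet : \det B = 0.
  have h1 : \det B = - \det B.
    rewrite -{1}det_tr hBt -scaleN1r detZ; ring.
  lra.
have /det0P [y y0 hy] : \det B == 0 by apply/eqP.
have fS : row_free S by rewrite /row_free hS.
exists (y *m S); split.
- apply: contra y0 => /eqP h; apply/eqP; apply: (row_free_inj fS).
  by rewrite h mul0mx.
- exact: submxMl.
- move=> x /submxP [z ->].
  rewrite /bform trmx_mul mulmxA -!mulmxA [S *m (C *m _)]mulmxA [S *m C *m _]mulmxA.
  by rewrite -/B mulmxA hy mul0mx mxE.
Qed.


Lemma case_in (A0 A1 : 'M[R]_4) (S : 'M[R]_(3, 4)) t u :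
  symplectic A0 ->
  (forall v w : 'rV[R]_4, (v <= S)%MS -> (w <= S)%MS ->
          (0 < bform A0 v w \/ 0 < bform A1 v w) ->
          0 <= bform A0 v w /\ 0 <= bform A1 v w) ->
  (forall v w : 'rV[R]_4, in_restr_ker A0 S v -> in_restr_ker A1 S v ->
          0 < bform A0 v w -> 0 <= bform A1 v w) ->
  0 < t -> t < 1 -> u != 0 -> (u <= S)%MS ->
  (forall w, bform (t *: A0 + (1 - t) *: A1) u w = 0) -> False.
Proof.
move=> [_ hnd] hi hii t0 t1 u0 uS hk.
have hk' w : t * bform A0 u w + (1 - t) * bform A1 u w = 0.
  by rewrite -bformZA hk.
have pos w : 0 < bform A0 u w -> 0 <= bform A1 u w -> False.
  move=> h1 h2; have := hk' w.
  have : 0 < t * bform A0 u w by apply: mulr_gt0.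
  have : 0 <= (1 - t) * bform A1 u w by apply: mulr_ge0 => //; lra.
  lra.
have k0 w : (w <= S)%MS -> bform A0 u w = 0.
  move=> wS; case: (ltrgt0P (bform A0 u w)) => // h.
  - by exfalso; apply: (pos w h); case: (hi u w uS wS (or_introl h)).
  - have h' : 0 < bform A0 u (- w) by rewrite bformNr oppr_gt0.
    have wS' : (- w <= S)%MS by rewrite (eqmx_opp w).
    by exfalso; apply: (pos _ h'); case: (hi u _ uS wS' (or_introl h')).
have k1 w : (w <= S)%MS -> bform A1 u w = 0.
  move=> wS; have := hk' w; rewrite k0 // mulr0 add0r => /eqP.
  rewrite mulf_eq0 => /orP [|/eqP //]; rewrite subr_eq0 => /eqP; lra.
have [w hw] : exists w, bform A0 u w <> 0.
  apply: NNPP => hn; move/eqP: u0; apply; apply: hnd => w.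
  by apply: NNPP => hw; apply: hn; exists w.
have kk0 : in_restr_ker A0 S u by split.
have kk1 : in_restr_ker A1 S u by split.
case: (ltrgt0P (bform A0 u w)) => h.
- exact: (pos w h (hii u w kk0 kk1 h)).
- have h' : 0 < bform A0 u (- w) by rewrite bformNr oppr_gt0.
  exact: (pos _ h' (hii u _ kk0 kk1 h')).
- by [].
Qed.

End S.

Theorem lemma7 (R : realType) (A0 A1 : 'M[R]_4) (S : 'M[R]_(3, 4))
  (hA0 : symplectic A0) (hA1 : symplectic A1)
  (hS : \rank S = 3%N)
  (hi : forall v w : 'rV[R]_4, (v <= S)%MS -> (w <= S)%MS ->
          (0 < bform A0 v w \/ 0 < bform A1 v w) ->
          0 <= bform A0 v w /\ 0 <= bform A1 v w)
  (hii : forall v w : 'rV[R]_4, in_restr_ker A0 S v -> in_restr_ker A1 S v ->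
          0 < bform A0 v w -> 0 <= bform A1 v w) :
  forall t : R, 0 <= t <= 1 -> symplectic (t *: A0 + (1 - t) *: A1).
Proof.
move=> t /andP [t0 t1].
have hanti : Defs.antisymmetric (t *: A0 + (1 - t) *: A1).
  move=> v w; rewrite !bformZA (proj1 hA0 v w) (proj1 hA1 v w); ring.
split => //.
have [->|tn0] := eqVneq t 0.
  by rewrite scale0r add0r subr0 scale1r; case: hA1.
have [->|tn1] := eqVneq t 1.
  by rewrite subrr scale0r addr0 scale1r; case: hA0.
have t0' : 0 < t by rewrite lt_neqAle eq_sym tn0 t0.
have t1' : t < 1 by rewrite lt_neqAle tn1 t1.
move=> v hv; apply: NNPP => /eqP v0.
case: (boolP (v <= S)%MS) => vS.
  exact: (@case_in R A0 A1 S t _ hA0 hi hii t0' t1' v0 vS hv).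
have [u [u0 uS hu]] := @odd_kernel R _ S hanti hS.
apply: (@case_in R A0 A1 S t _ hA0 hi hii t0' t1' u0 uS) => w.
have full : row_full (S + v)%MS.
  have lt : (S < S + v)%MS.
    by rewrite ltmxE addsmxSl addsmx_sub negb_and vS orbT.
  move: lt; rewrite ltmxErank hS => /andP [_ h].
  by rewrite -col_leq_rank.
have /sub_addsmxP [[a b] /= ->] := submx_full w full.
rewrite bformDr hu ?submxMl // (mx11_scalar b) mul_scalar_mx bformZr.
by rewrite hanti hv oppr0 mulr0 addr0.
Qed.
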